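(* For the single-choice constraint $\mathcal{F}=\{S\subseteq E:|S|\le1\}$ and every product distribution $D$ of the element weights, $$\lim_{M\to\infty}\textsf{EoR}(\mathcal{F},M^D)=\textsf{PbM}(\mathcal{F},D).$$
   Context: Setting: $E$ is a finite ground set; each $e\in E$ has a nonnegative weight $w_e\sim D_e$, independently, the $D_e$ having no point masses, $D=\times_e D_e$. Elements arrive one by one in a fixed order with their realized weights; an online algorithm (knowing the distribution, possibly randomized) decides immediately and irrevocably upon each arrival whether to accept, keeping the accepted set in $\mathcal{F}$. $f(\boldsymbol{w})=\max_{e}w_e$; $\boldsymbol{w}(\textsf{ALG}(\boldsymbol{w}))$ is the weight of the set selected by $\textsf{ALG}$. For a product distribution $P$, $\textsf{EoR}(\mathcal{F},P)=\sup_{\textsf{ALG}}\mathbf{E}_{\boldsymbol{w}\sim P}[\boldsymbol{w}(\textsf{ALG}(\boldsymbol{w}))/f(\boldsymbol{w})]$ and $\textsf{PbM}(\mathcal{F},P)=\sup_{\textsf{ALG}}\Pr_{\boldsymbol{w}\sim P}[\boldsymbol{w}(\textsf{ALG}(\boldsymbol{w}))=f(\boldsymbol{w})]$. For $M>0$, $M^D$ is the product distribution of $(M^{w_1},\dots,M^{w_{|E|}})$ where $\boldsymbol{w}\sim D$. *)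

(* Defs.v *)
From HB Require Import structures.
From mathcomp Require Import all_boot all_order all_algebra.
From mathcomp Require Import all_classical all_reals all_analysis.
Set Implicit Arguments. Unset Strict Implicit. Unset Printing Implicit Defensive.
Import Order.TTheory GRing.Theory Num.Theory.
Local Open Scope classical_set_scope.
Local Open Scope ring_scope.

Section Defs.
Context {R : realType} {d : measure_display} {Omega : measurableType d}.

(* Ground set E = 'I_n, elements arriving in the order 0, 1, ..., n-1.
   A weight vector is an n.-tuple of reals (product sigma-algebra). *)

Definition mutually_independent (P : probability Omega R) (n : nat)
    (X : 'I_n -> Omega -> R) : Prop :=
  forall B : 'I_n -> set R, (forall e, measurable (B e)) ->
    P (\bigcap_(e in [set: 'I_n]) (X e @^-1` B e)) =
    (\prod_(e < n) P (X e @^-1` B e))%E.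

Definition no_point_masses (P : probability Omega R) (n : nat)
    (X : 'I_n -> Omega -> R) : Prop :=
  forall (e : 'I_n) (x : R), P (X e @^-1` [set x]) = 0%E.

(* A (possibly randomized) online algorithm for the single-choice constraint
   {S | |S| <= 1}, in behavioural form: alg i w is the probability that the
   algorithm accepts element i upon its arrival, given that it has not
   accepted anything before; it may depend only on the weights w_0..w_i
   already revealed, and is a measurable function of the weight vector. *)
Definition online_single_choice_alg (n : nat) (alg : 'I_n -> n.-tuple R -> R)
    : Prop :=
  forall i : 'I_n,
    [/\ (forall w, 0 <= alg i w <= 1),
        (forall w w' : n.-tuple R,
            (forall j : 'I_n, (j <= i)%N -> tnth w j = tnth w' j) ->
            alg i w = alg i w')
      & measurable_fun setT (alg i)].

Definition sel_prob (n : nat) (alg : 'I_n -> n.-tuple R -> R)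
    (w : n.-tuple R) (i : 'I_n) : R :=
  alg i w * \prod_(j < n | (j < i)%N) (1 - alg j w).

(* f(w) = max_e w_e  (weights are nonnegative). *)
Definition fmax (n : nat) (w : n.-tuple R) : R :=
  \big[Num.max/0]_(e < n) tnth w e.

(* w(ALG(w))/f(w), averaged over the algorithm's internal randomness. *)
Definition ratio (n : nat) (alg : 'I_n -> n.-tuple R -> R) (w : n.-tuple R) : R :=
  (\sum_(i < n) sel_prob alg w i * tnth w i) / fmax w.

(* Pr[w(ALG(w)) = f(w)] over the algorithm's internal randomness
   (selecting nothing has weight 0). *)
Definition hit_prob (n : nat) (alg : 'I_n -> n.-tuple R -> R) (w : n.-tuple R) : R :=
  \sum_(i < n) sel_prob alg w i * (tnth w i == fmax w)%:R
  + (1 - \sum_(i < n) sel_prob alg w i) * (0 == fmax w)%:R.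

Definition weights (n : nat) (X : 'I_n -> Omega -> R) (om : Omega) : n.-tuple R :=
  [tuple X i om | i < n].

Definition EoR (P : probability Omega R) (n : nat) (X : 'I_n -> Omega -> R)
    : \bar R :=
  ereal_sup [set (\int[P]_om (ratio alg (weights X om))%:E)%E
            | alg in [set alg | online_single_choice_alg alg]].

Definition PbM (P : probability Omega R) (n : nat) (X : 'I_n -> Omega -> R)
    : \bar R :=
  ereal_sup [set (\int[P]_om (hit_prob alg (weights X om))%:E)%E
            | alg in [set alg | online_single_choice_alg alg]].

Definition powX (M : R) (n : nat) (X : 'I_n -> Omega -> R) : 'I_n -> Omega -> R :=
  fun e om => M `^ (X e om).

End Defs.

(* Main.v *)
Require Import Defs.
From HB Require Import structures.
From mathcomp Require Import all_boot all_order all_algebra.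
From mathcomp Require Import all_classical all_reals all_analysis.
From mathcomp Require Import ring lra.
Import Order.TTheory GRing.Theory Num.Theory.
Local Open Scope classical_set_scope.
Local Open Scope ring_scope.
Set Implicit Arguments. Unset Strict Implicit. Unset Printing Implicit Defensive.

Section Aux.
Variable R : realType.
Variable n : nat.
Implicit Types (w : n.-tuple R) (alg : 'I_n -> n.-tuple R -> R).

Lemma bigmax_ge0 (s : seq 'I_n) (f : 'I_n -> R) : 0 <= \big[Num.max/0]_(e <- s) f e.
Proof. elim: s => [|a s IH]; first by rewrite big_nil. by rewrite big_cons le_max IH orbT. Qed.

Lemma bigmax_ub (s : seq 'I_n) (f : 'I_n -> R) i : i \in s -> f i <= \big[Num.max/0]_(e <- s) f e.
Proof.
elim: s => [//|a s IH]; rewrite inE big_cons le_max => /orP[/eqP->|/IH->]; last by rewrite orbT.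
by rewrite lexx.
Qed.

Lemma bigmax_cases (s : seq 'I_n) (f : 'I_n -> R) :
  \big[Num.max/0]_(e <- s) f e = 0 \/ exists i, \big[Num.max/0]_(e <- s) f e = f i.
Proof.
elim: s => [|a s IH]; first by left; rewrite big_nil.
rewrite big_cons; have [h|h] := leP (f a) (\big[Num.max/0]_(e <- s) f e).
  by [].
by right; exists a.
Qed.

Lemma fmax_ge0 w : 0 <= fmax w.
Proof. exact: bigmax_ge0. Qed.

Lemma fmax_ub w i : tnth w i <= fmax w.
Proof. by apply: bigmax_ub; rewrite mem_index_enum. Qed.

Lemma fmax_cases w : fmax w = 0 \/ exists i, fmax w = tnth w i.
Proof. exact: bigmax_cases. Qed.

Definition Tpow (M : R) w : n.-tuple R := [tuple M `^ tnth w i | i < n].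

Lemma fmax_Tpow (M : R) w : (0 < n)%N -> 1 <= M -> (forall i, 0 <= tnth w i) ->
  fmax (Tpow M w) = M `^ fmax w.
Proof.
move=> n0 M1 w0; set i0 := Ordinal n0.
have M0 : 0 < M by apply: lt_le_trans M1.
apply/le_anti/andP; split.
  have [h|[k ->]] := fmax_cases (Tpow M w).
    have := fmax_ub (Tpow M w) i0; rewrite h tnth_mktuple => h2.
    by have := powR_gt0 (tnth w i0) M0; rewrite ltNge h2.
  by rewrite tnth_mktuple; apply: ler_powR => //; exact: fmax_ub.
have [h|[k ->]] := fmax_cases w.
  rewrite h powRr0; apply: le_trans (fmax_ub _ i0).
  by rewrite tnth_mktuple -(powRr0 M) ler_powR.
by have := fmax_ub (Tpow M w) k; rewrite tnth_mktuple.
Qed.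


Definition Qp (alg : 'I_n -> n.-tuple R -> R) w (k : nat) :=
  \prod_(j < n | (j < k)%N) (1 - alg j w).

Lemma QpS alg w (i : 'I_n) : Qp alg w i.+1 = (1 - alg i w) * Qp alg w i.
Proof.
rewrite /Qp (bigD1 i) ?ltnSn //=; congr (_ * _); apply: eq_bigl => j.
by rewrite ltnS [RHS]ltn_neqAle andbC.
Qed.

Lemma sel_probE alg w (i : 'I_n) : sel_prob alg w i = Qp alg w i - Qp alg w i.+1.
Proof. by rewrite QpS /sel_prob /Qp; ring. Qed.

Lemma sel_ge0 alg w i : online_single_choice_alg alg -> 0 <= sel_prob alg w i.
Proof.
move=> oa; rewrite /sel_prob; apply: mulr_ge0.
  by have [/(_ w) /andP[]] := oa i.
apply: prodr_ge0 => j _; rewrite subr_ge0; by have [/(_ w) /andP[]] := oa j.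
Qed.

Lemma sel_sum alg w : online_single_choice_alg alg ->
  0 <= \sum_i sel_prob alg w i <= 1.
Proof.
move=> oa; apply/andP; split; first by apply: sumr_ge0 => i _; exact: sel_ge0.
under eq_bigr do rewrite sel_probE -opprB.
rewrite -(big_mkord (fun _ => true) (fun i => -(Qp alg w i.+1 - Qp alg w i))).
rewrite sumrN telescope_sumr // (_ : Qp alg w 0 = 1); last by rewrite /Qp big_pred0.
rewrite opprB lerBlDr lerDl; apply: prodr_ge0 => j _; rewrite subr_ge0; by have [/(_ w) /andP[]] := oa j.
Qed.


Lemma meas_tmap (h : R -> R) : measurable_fun setT h ->
  measurable_fun setT (fun w : n.-tuple R => [tuple h (tnth w i) | i < n]).
Proof.
move=> mh; apply/measurable_fun_tnthP => i.
rewrite (_ : _ \o _ = h \o (fun w : n.-tuple R => tnth w i)); last first.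
  by apply/funext => w /=; rewrite tnth_mktuple.
by apply: measurableT_comp => //; exact: measurable_tnth.
Qed.

Lemma meas_alg alg i : online_single_choice_alg alg -> measurable_fun setT (alg i).
Proof. by move=> oa; have [] := oa i. Qed.

Lemma meas_sel alg i : online_single_choice_alg alg ->
  measurable_fun setT (fun w => sel_prob alg w i).
Proof.
move=> oa; rewrite /sel_prob; apply: measurable_realfun.measurable_funM; first exact: meas_alg.
have -> : (fun w => \prod_(j < n | (j < i)%N) (1 - alg j w)) =
  (fun w => \prod_(j < n) (if (j < i)%N then 1 - alg j w else 1)).
  by apply/funext => w; rewrite big_mkcond.
apply: (measurable_prod (h := fun (j : 'I_n) w => if (j < i)%N then 1 - alg j w else 1)) => j _ /=; case: (j < i)%N; last exact: measurable_cst.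
by apply: measurable_realfun.measurable_funB; [exact: measurable_cst|exact: meas_alg].
Qed.

Lemma meas_fmax : measurable_fun setT (@fmax R n).
Proof.
rewrite /fmax; elim: (index_enum _) => [|a s IH].
  by under eq_fun do rewrite big_nil; exact: measurable_cst.
under eq_fun do rewrite big_cons.
by apply: measurable_realfun.measurable_maxr => //; exact: measurable_tnth.
Qed.

Lemma meas_ratio alg : online_single_choice_alg alg -> measurable_fun setT (Defs.ratio alg).
Proof.
move=> oa; rewrite /Defs.ratio.
under eq_fun do rewrite -(powR_inv1 (fmax_ge0 _)).
apply: measurable_realfun.measurable_funM.
  apply: (@measurable_sum _ _ _ setT _ (index_enum _) (fun (i : 'I_n) w => sel_prob alg w i * tnth w i)) => i /=.
  apply: measurable_realfun.measurable_funM; first exact: meas_sel.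
  exact: measurable_tnth.
by apply: (measurableT_comp (f := fun x : R => x `^ (-1)) (g := @fmax R n)) => //; exact: meas_fmax.
Qed.

Lemma meas_ind (f g : n.-tuple R -> R) : measurable_fun setT f -> measurable_fun setT g ->
  measurable_fun setT (fun w => ((f w == g w)%:R : R)).
Proof.
move=> mf mg.
rewrite (_ : (fun w => _) = (fun w => if f w == g w then 1 else 0)); last first.
  by apply/funext => w; case: (f w == g w).
apply: measurable_fun_ifT; [exact: measurable_realfun.measurable_fun_eqr|exact: measurable_cst|exact: measurable_cst].
Qed.

Lemma meas_hit alg : online_single_choice_alg alg -> measurable_fun setT (hit_prob alg).
Proof.
move=> oa; rewrite /hit_prob; apply: measurable_realfun.measurable_funD.
  apply: (@measurable_sum _ _ _ setT _ (index_enum _) (fun (i : 'I_n) w => sel_prob alg w i * (tnth w i == fmax w)%:R)) => i /=.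
  apply: measurable_realfun.measurable_funM; first exact: meas_sel.
  by apply: meas_ind; [exact: measurable_tnth|exact: meas_fmax].
apply: measurable_realfun.measurable_funM.
  apply: measurable_realfun.measurable_funB; first exact: measurable_cst.
  by apply: (@measurable_sum _ _ _ setT _ (index_enum _) (fun (i : 'I_n) w => sel_prob alg w i)) => i; exact: meas_sel.
by apply: meas_ind; [exact: measurable_cst|exact: meas_fmax].
Qed.


Definition Hf (M : R) w : R :=
  \sum_i (tnth w i != fmax w)%:R * expR ((tnth w i - fmax w) * ln M).
Definition Zf w : R := (fmax w == 0)%:R.

Lemma powRE' (M x : R) : 0 < M -> M `^ x = expR (x * ln M).
Proof. by move=> M0; rewrite /powR gt_eqF. Qed.

Lemma key alg alg2 (M : R) w : (0 < n)%N -> 1 < M -> online_single_choice_alg alg ->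
  (forall i, 0 <= tnth w i) -> (forall j, alg2 j (Tpow M w) = alg j w) ->
  Defs.ratio alg2 (Tpow M w) <= hit_prob alg w + Hf M w /\ hit_prob alg w <= Defs.ratio alg2 (Tpow M w) + Zf w.
Proof.
move=> n0 M1 oa w0 h2.
have M0 : 0 < M by apply: lt_trans M1.
have s2 i : sel_prob alg2 (Tpow M w) i = sel_prob alg w i.
  by rewrite /sel_prob h2; congr (_ * _); apply: eq_bigr => j _; rewrite h2.
set F := fmax w.
have eR : Defs.ratio alg2 (Tpow M w) =
    \sum_i sel_prob alg w i * expR ((tnth w i - F) * ln M).
  rewrite /Defs.ratio fmax_Tpow ?ltW // mulr_suml; apply: eq_bigr => i _.
  by rewrite s2 tnth_mktuple -mulrA !powRE' // mulrBl expRB.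
have eE i : expR ((tnth w i - F) * ln M) =
    (tnth w i == F)%:R + (tnth w i != F)%:R * expR ((tnth w i - F) * ln M).
  by case: eqP => [->|_] /=; rewrite ?subrr ?mul0r ?expR0 ?mul0r ?addr0 ?add0r ?mul1r.
have eR2 : Defs.ratio alg2 (Tpow M w) = \sum_i sel_prob alg w i * (tnth w i == F)%:R +
    \sum_i sel_prob alg w i * ((tnth w i != F)%:R * expR ((tnth w i - F) * ln M)).
  by rewrite eR -big_split; apply: eq_bigr => i _; rewrite {1}eE mulrDr.
have /andP[sb0 sb1] := sel_sum w oa.
have s1 i : sel_prob alg w i <= 1.
  rewrite /sel_prob; apply: mulr_ile1.
  - by have [/(_ w) /andP[]] := oa i.
  - by apply: prodr_ge0 => j _; rewrite subr_ge0; have [/(_ w) /andP[]] := oa j.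
  - by have [/(_ w) /andP[]] := oa i.
  - apply: prodr_ile1 => j _; have [/(_ w) /andP[a0 a1]] := oa j.
    by rewrite subr_ge0 a1 gerBl a0.
split.
  rewrite eR2 /hit_prob -/F -addrA lerD2l -[X in X <= _]add0r; apply: lerD.
    by apply: mulr_ge0; [rewrite subr_ge0|exact: ler0n].
  apply: ler_sum => i _; apply: ler_piMl; last exact: s1.
  by apply: mulr_ge0; [exact: ler0n|exact: expR_ge0].
rewrite eR2 /hit_prob -/F -addrA lerD2l; apply: (@le_trans _ _ (Zf w)).
  rewrite /Zf -/F eq_sym; apply: ler_piMl; first exact: ler0n.
  by rewrite gerBl.
rewrite lerDr; apply: sumr_ge0 => i _; apply: mulr_ge0; first exact: sel_ge0.
by apply: mulr_ge0; [exact: ler0n|exact: expR_ge0].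
Qed.

End Aux.

Section Main.
Import numFieldNormedType.Exports.
Import measurable_realfun.
Variables (R : realType) (d : measure_display) (Omega : measurableType d).
Variables (P : probability Omega R) (n : nat) (X : 'I_n -> Omega -> R).
Hypotheses (n0 : (0 < n)%N) (mX : forall e, measurable_fun setT (X e))
  (X0 : forall e om, 0 <= X e om) (npm : no_point_masses P X).

Local Notation W := (weights X).
Implicit Types (alg : 'I_n -> n.-tuple R -> R) (w : n.-tuple R).

Lemma mW : measurable_fun setT W.
Proof.
apply/measurable_fun_tnthP => i; rewrite (_ : _ \o _ = X i) //.
by apply/funext => om /=; rewrite tnth_mktuple.
Qed.

Lemma W0 om i : 0 <= tnth (W om) i.
Proof. by rewrite tnth_mktuple. Qed.

Lemma Wpow M om : weights (powX M X) om = Tpow M (W om).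
Proof. by apply: eq_from_tnth => i; rewrite !tnth_mktuple. Qed.

Definition beta (M : R) (alg : 'I_n -> n.-tuple R -> R) :=
  fun i w => alg i (Tpow M w).
Definition Lmap (M : R) (v : n.-tuple R) : n.-tuple R :=
  [tuple ln (tnth v i) / ln M | i < n].
Definition alpha (M : R) (alg : 'I_n -> n.-tuple R -> R) :=
  fun i v => alg i (Lmap M v).

Lemma tmap_online (h : R -> R) (alg : 'I_n -> n.-tuple R -> R) :
  measurable_fun setT h -> online_single_choice_alg alg ->
  online_single_choice_alg (fun i w => alg i [tuple h (tnth w j) | j < n]).
Proof.
move=> mh oa i; have [a01 ac am] := oa i; split.
- by move=> w; exact: a01.
- move=> w w' ww; apply: ac => j ji; rewrite !tnth_mktuple ww //.
- by apply: measurableT_comp => //; exact: meas_tmap.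
Qed.

Lemma beta_online M alg : online_single_choice_alg alg ->
  online_single_choice_alg (beta M alg).
Proof. by apply: tmap_online; exact: measurable_realfun.measurable_powRr. Qed.

Lemma alpha_online M alg : online_single_choice_alg alg ->
  online_single_choice_alg (alpha M alg).
Proof.
move=> oa; apply: (@tmap_online (fun x => ln x / ln M) alg) => //.
by apply: measurable_realfun.measurable_funM; [exact: measurable_realfun.measurable_ln|exact: measurable_cst].
Qed.

Lemma LmapK M w : 1 < M -> Lmap M (Tpow M w) = w.
Proof.
move=> M1; apply: eq_from_tnth => i; rewrite !tnth_mktuple ln_powR mulfK //.
by rewrite gt_eqF // ln_gt0.
Qed.

Lemma int_le3 (f g h : Omega -> R) :
  measurable_fun setT f -> measurable_fun setT g -> measurable_fun setT h ->
  (forall om, 0 <= f om) -> (forall om, 0 <= g om) -> (forall om, 0 <= h om) ->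
  (forall om, f om <= g om + h om) ->
  (\int[P]_om (f om)%:E <= \int[P]_om (g om)%:E + \int[P]_om (h om)%:E)%E.
Proof.
move=> mf mg mh f0 g0 h0 fgh.
apply: (@le_trans _ _ (\int[P]_om ((g om + h om)%:E))%E).
  apply: ge0_le_integral => //.
  - by move=> om _; rewrite lee_fin.
  - exact/measurable_realfun.measurable_EFinP.
  - by apply/measurable_realfun.measurable_EFinP; exact: measurable_realfun.measurable_funD.
  - by move=> om _; rewrite lee_fin.
rewrite (eq_integral (fun om => (g om)%:E + (h om)%:E)%E); last by move=> om _; rewrite EFinD.
rewrite ge0_integralD //.
- by move=> om _; rewrite lee_fin.
- exact/measurable_realfun.measurable_EFinP.
- by move=> om _; rewrite lee_fin.
- exact/measurable_realfun.measurable_EFinP.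
Qed.

Lemma int01 (f : Omega -> R) : measurable_fun setT f -> (forall om, 0 <= f om <= 1) ->
  (0 <= \int[P]_om (f om)%:E <= 1)%E.
Proof.
move=> mf f01; apply/andP; split.
  by apply: integral_ge0 => om _; rewrite lee_fin; case/andP: (f01 om).
apply: (@le_trans _ _ (\int[P]_om (cst 1%:E) om)%E).
  apply: ge0_le_integral => //.
  - by move=> om _; rewrite lee_fin; case/andP: (f01 om).
  - exact/measurable_realfun.measurable_EFinP.
  - by move=> om _; rewrite lee_fin; case/andP: (f01 om).
by rewrite integral_cst // mul1e probability_le1.
Qed.


Lemma bool01 (b : bool) : 0 <= (b%:R : R) <= 1.
Proof. by case: b; rewrite /= ?lexx ?ler01. Qed.

Lemma hit01 alg w : online_single_choice_alg alg -> 0 <= hit_prob alg w <= 1.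
Proof.
move=> oa; have /andP[sb0 sb1] := sel_sum w oa; rewrite /hit_prob.
apply/andP; split.
  apply: addr_ge0; first by apply: sumr_ge0 => i _; apply: mulr_ge0; [exact: sel_ge0|exact: ler0n].
  by apply: mulr_ge0; [rewrite subr_ge0|exact: ler0n].
apply: (@le_trans _ _ (\sum_i sel_prob alg w i + (1 - \sum_i sel_prob alg w i))).
  apply: lerD.
    apply: ler_sum => i _; apply: ler_piMr; first exact: sel_ge0.
    by case/andP: (bool01 (tnth w i == fmax w)).
  apply: ler_piMr; first by rewrite subr_ge0.
  by case/andP: (bool01 (0 == fmax w)).
by rewrite addrCA subrr addr0.
Qed.

Lemma ratio_ge0 alg w : online_single_choice_alg alg -> (forall i, 0 <= tnth w i) ->
  0 <= Defs.ratio alg w.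
Proof.
move=> oa w0; apply: divr_ge0; last exact: fmax_ge0.
by apply: sumr_ge0 => i _; apply: mulr_ge0; [exact: sel_ge0|exact: w0].
Qed.

Lemma Hf_bounds (M : R) w : 1 <= M -> 0 <= Hf M w <= n%:R.
Proof.
move=> M1; have t01 i : 0 <= (tnth w i != fmax w)%:R * expR ((tnth w i - fmax w) * ln M) <= 1.
  have /andP[b0 b1] := bool01 (tnth w i != fmax w).
  apply/andP; split; first by apply: mulr_ge0 => //; exact: expR_ge0.
  apply: mulr_ile1; [exact: b0|exact: expR_ge0|exact: b1|].
  rewrite expR_le1; apply: mulr_le0_ge0; last exact: ln_ge0.
  by rewrite subr_le0; exact: fmax_ub.
apply/andP; split; first by apply: sumr_ge0 => i _; case/andP: (t01 i).
apply: (@le_trans _ _ (\sum_(i < n) (1 : R))).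
  by apply: ler_sum => i _; case/andP: (t01 i).
by rewrite sumr_const card_ord.
Qed.

Lemma Hf_mono (M M' : R) w : 1 <= M -> M <= M' -> Hf M' w <= Hf M w.
Proof.
move=> M1 MM; apply: ler_sum => i _; apply: ler_wpM2l; first exact: ler0n.
rewrite ler_expR.
have c0 : tnth w i - fmax w <= 0 by rewrite subr_le0; exact: fmax_ub.
have M0 : 0 < M by apply: lt_le_trans ltr01 M1.
have M'0 : 0 < M' by apply: lt_le_trans M0 MM.
have l0 : ln M <= ln M' by rewrite ler_ln ?posrE.
nra.
Qed.

Lemma meas_indn (f g : n.-tuple R -> R) : measurable_fun setT f -> measurable_fun setT g ->
  measurable_fun setT (fun w => ((f w != g w)%:R : R)).
Proof.
move=> mf mg.
rewrite (_ : (fun w => _) = (fun w => if f w == g w then 0 else 1)); last first.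
  by apply/funext => w; case: (f w == g w).
apply: measurable_fun_ifT; [exact: measurable_realfun.measurable_fun_eqr|exact: measurable_cst|exact: measurable_cst].
Qed.

Lemma meas_Hf (M : R) : measurable_fun setT (@Hf R n M).
Proof.
rewrite /Hf; apply: (@measurable_sum _ _ _ setT _ (index_enum _)
  (fun (i : 'I_n) w => (tnth w i != fmax w)%:R * expR ((tnth w i - fmax w) * ln M))) => i /=.
apply: measurable_realfun.measurable_funM.
  by apply: meas_indn; [exact: measurable_tnth|exact: meas_fmax].
apply: (measurableT_comp (f := expR) (g := fun w : n.-tuple R => (tnth w i - fmax w) * ln M)).
  exact: measurable_realfun.measurable_expR.
apply: measurable_realfun.measurable_funM; last exact: measurable_cst.
by apply: measurable_realfun.measurable_funB; [exact: measurable_tnth|exact: meas_fmax].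
Qed.

Lemma meas_Zf : measurable_fun setT (@Zf R n).
Proof. by apply: meas_ind; [exact: meas_fmax|exact: measurable_cst]. Qed.

Lemma Zint : (\int[P]_om (Zf (W om))%:E = 0)%E.
Proof.
set i0 := Ordinal n0.
set A := X i0 @^-1` [set 0].
have mA : measurable A.
  by have := mX i0 measurableT (measurable_set1 0); rewrite setTI.
apply/eqP; rewrite eq_le; apply/andP; split; last first.
  by apply: integral_ge0 => om _; rewrite lee_fin; case/andP: (bool01 (fmax (W om) == 0)).
apply: (@le_trans _ _ (\int[P]_om (\1_A om)%:E)%E).
  apply: ge0_le_integral => //.
  - by move=> om _; rewrite lee_fin; case/andP: (bool01 (fmax (W om) == 0)).
  - apply/measurable_realfun.measurable_EFinP.
    by apply: (measurableT_comp (f := @Zf R n)); [exact: meas_Zf|exact: mW].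
  - apply/measurable_realfun.measurable_EFinP.
    exact: measurable_realfun.measurable_indic.
  - move=> om _; rewrite lee_fin /Zf indicE; case: eqP => h.
      have : X i0 om <= 0 by rewrite -h -(tnth_mktuple (fun i => X i om) i0); exact: fmax_ub.
      move=> Xle; have Xe : X i0 om = 0 by apply/le_anti; rewrite Xle X0.
      by rewrite mem_set.
    exact: ler0n.
by rewrite integral_indic // setIT; have := npm i0 0; rewrite /= => ->.
Qed.


Lemma cvg_sum0 (I : Type) (s : seq I) (u : I -> nat -> R) :
  (forall i, (fun k => u i k) @ \oo --> 0) ->
  (fun k => \sum_(i <- s) u i k) @ \oo --> 0.
Proof.
move=> hu; elim: s => [|a s IH].
  under eq_fun do rewrite big_nil.
  exact: cvg_cst.
under eq_fun do rewrite big_cons.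
apply: cvg_trans (cvgD (hu a) IH) _; rewrite addr0; exact: cvg_id.
Qed.

Lemma Hf_cvg w : (fun k : nat => Hf (expR k%:R) w) @ \oo --> 0.
Proof.
have -> : (fun k : nat => Hf (expR k%:R) w) = (fun k => \sum_(i <- index_enum 'I_n)
    (tnth w i != fmax w)%:R * expR (tnth w i - fmax w) ^+ k).
  apply/funext => k; rewrite /Hf expRK; apply: eq_bigr => i _; by rewrite expRM_natr.
apply: (@cvg_sum0 _ (index_enum _) (fun (i : 'I_n) (k : nat) => (tnth w i != fmax w)%:R * expR (tnth w i - fmax w) ^+ k)) => i /=.
case: eqP => h /=.
  rewrite (_ : (fun k : nat => _) = fun _ => 0); first exact: cvg_cst.
  by apply/funext => k; rewrite mul0r.
rewrite (_ : (fun k : nat => _) = (fun k => expR (tnth w i - fmax w) ^+ k)); last first.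
  by apply/funext => k; rewrite mul1r.
apply: cvg_expr; rewrite ger0_norm ?expR_ge0 // expR_lt1 subr_lt0 lt_neqAle fmax_ub andbT.
exact/eqP.
Qed.

Lemma delta_seq :
  (fun k : nat => \int[P]_om (Hf (expR k%:R) (W om))%:E)%E @ \oo --> 0%E.
Proof.
have mf_ : forall k : nat, measurable_fun setT (fun om => (Hf (expR k%:R) (W om))%:E).
  move=> k; apply/measurable_realfun.measurable_EFinP.
  by apply: (measurableT_comp (f := @Hf R n (expR k%:R))); [exact: meas_Hf|exact: mW].
have f_f : forall om, setT om ->
    (fun k : nat => (Hf (expR k%:R) (W om))%:E) @ \oo --> cst 0%E om.
  move=> om _; apply: cvg_EFin; first by apply: nearW.
  exact: Hf_cvg.
have fing : forall om : Omega, setT om -> cst (n%:R : R)%:E om \is a fin_num by [].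
have ig : P.-integrable setT (cst (n%:R : R)%:E).
  exact: finite_measure_integrable_cst.
have absfg : forall (k : nat) om, setT om ->
    (`|(fun k om => (Hf (expR k%:R) (W om))%:E) k om| <= cst (n%:R : R)%:E om)%E.
  move=> k om _; rewrite /= lee_fin.
  have hb : (1 : R) <= expR (k%:R : R) by apply: (le_trans _ (expR_ge1Dx (k%:R : R))); rewrite lerDl.
  have /andP[h0 h1] := Hf_bounds (W om) hb.
  by rewrite ger0_norm.
have := dominated_cvg measurableT mf_ f_f fing ig absfg.
by rewrite integral0.
Qed.


Definition alg0 : 'I_n -> n.-tuple R -> R := fun _ _ => 0.

Lemma alg0_online : online_single_choice_alg alg0.
Proof. by move=> i; split => //; [move=> w; rewrite /alg0 lexx ler01|exact: measurable_cst]. Qed.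

Lemma mTW (M : R) : measurable_fun setT (fun om => Tpow M (W om)).
Proof.
apply: (measurableT_comp (f := fun w : n.-tuple R => [tuple M `^ tnth w i | i < n])); last exact: mW.
by apply: meas_tmap; exact: measurable_realfun.measurable_powRr.
Qed.

Lemma Q01 : (0 <= PbM P X <= 1)%E.
Proof.
apply/andP; split.
  apply: le_ereal_sup_tmp; exists (\int[P]_om (hit_prob alg0 (W om))%:E)%E.
    by exists alg0 => //; exact: alg0_online.
  by apply: integral_ge0 => om _; rewrite lee_fin; case/andP: (hit01 (W om) alg0_online).
apply: ge_ereal_sup => _ [alg oa <-].
have mh : measurable_fun setT (fun om => hit_prob alg (W om)).
  by apply: (measurableT_comp (f := hit_prob alg)); [exact: meas_hit|exact: mW].
by have /andP[] := int01 mh (fun om => hit01 (W om) oa).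
Qed.

Lemma F2 (M : R) : 1 < M ->
  (EoR P (powX M X) <= PbM P X + \int[P]_om (Hf M (W om))%:E)%E.
Proof.
move=> M1; apply: ge_ereal_sup => _ [alg oa <-].
rewrite (eq_integral (fun om => (Defs.ratio alg (Tpow M (W om)))%:E)); last first.
  by move=> om _; rewrite Wpow.
apply: le_trans (@int_le3 (fun om => Defs.ratio alg (Tpow M (W om)))
  (fun om => hit_prob (beta M alg) (W om)) (fun om => Hf M (W om)) _ _ _ _ _ _ _) _.
- by apply: (measurableT_comp (f := Defs.ratio alg)); [exact: meas_ratio|exact: mTW].
- apply: (measurableT_comp (f := hit_prob (beta M alg))); last exact: mW.
  by apply: meas_hit; exact: beta_online.
- by apply: (measurableT_comp (f := @Hf R n M)); [exact: meas_Hf|exact: mW].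
- by move=> om; apply: ratio_ge0 => // i; rewrite tnth_mktuple powR_ge0.
- by move=> om; case/andP: (hit01 (W om) (beta_online M oa)).
- by move=> om; case/andP: (Hf_bounds (W om) (ltW M1)).
- move=> om.
  have [h _] := @key R n (beta M alg) alg M (W om) n0 M1 (beta_online M oa) (W0 om) (fun j => erefl).
  exact: h.
apply: leeD2r; apply: ereal_sup_ubound; exists (beta M alg) => //; exact: beta_online.
Qed.

Lemma F1 (M : R) : 1 < M -> (PbM P X <= EoR P (powX M X))%E.
Proof.
move=> M1; apply: ge_ereal_sup => _ [alg oa <-].
have h2 : forall om j, alpha M alg j (Tpow M (W om)) = alg j (W om).
  by move=> om j; rewrite /alpha LmapK.
apply: le_trans (@int_le3 (fun om => hit_prob alg (W om))
  (fun om => Defs.ratio (alpha M alg) (Tpow M (W om))) (fun om => Zf (W om)) _ _ _ _ _ _ _) _.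
- by apply: (measurableT_comp (f := hit_prob alg)); [exact: meas_hit|exact: mW].
- apply: (measurableT_comp (f := Defs.ratio (alpha M alg))); last exact: mTW.
  by apply: meas_ratio; exact: alpha_online.
- by apply: (measurableT_comp (f := @Zf R n)); [exact: meas_Zf|exact: mW].
- by move=> om; case/andP: (hit01 (W om) oa).
- move=> om; apply: ratio_ge0; first exact: alpha_online.
  by move=> i; rewrite tnth_mktuple powR_ge0.
- by move=> om; case/andP: (bool01 (fmax (W om) == 0)).
- move=> om.
  have [_ h] := @key R n alg (alpha M alg) M (W om) n0 M1 oa (W0 om) (h2 om).
  exact: h.
rewrite Zint adde0; apply: ereal_sup_ubound; exists (alpha M alg); first exact: alpha_online.
by apply: eq_integral => om _; rewrite Wpow.
Qed.


Lemma main_cvg : EoR P (powX M X) @[M --> +oo%R] --> PbM P X.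
Proof.
have /andP[Q0 Q1] := Q01.
have Qfin : PbM P X \is a fin_num.
  by rewrite ge0_fin_numE // (le_lt_trans Q1) // ltry.
set q := fine (PbM P X).
have Qq : PbM P X = q%:E by rewrite fineK.
have [dfin dcv] := (fine_cvgP _ _).1 delta_seq.
have Hkey : forall eps : R, 0 < eps -> \forall M \near +oo%R,
    EoR P (powX M X) \is a fin_num /\ `|q - fine (EoR P (powX M X))| <= eps.
  move=> eps eps0.
  have := (cvgrPdist_le _ _).1 dcv eps eps0 => dnear.
  have := @filterS2 _ _ _ _ _ _ (fun k a b => conj a b) dfin (dnear _).
  move=> [k0 _ Hk]; have [fk0 dk0] := Hk k0 (leqnn k0).
  set dk := (\int[P]_om (Hf (expR k0%:R) (W om))%:E)%E in fk0 dk0 *.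
  near=> M.
  have M1 : 1 < M by near: M; apply: nbhs_pinfty_gt; exact: num_real.
  have Mk : expR k0%:R <= M by near: M; apply: nbhs_pinfty_ge; exact: num_real.
  have k1 : (1 : R) <= expR (k0%:R : R).
    by apply: (le_trans _ (expR_ge1Dx (k0%:R : R))); rewrite lerDl.
  have dM : (\int[P]_om (Hf M (W om))%:E <= (fine dk)%:E)%E.
    rewrite fineK //; apply: ge0_le_integral => //.
    - by move=> om _; rewrite lee_fin; case/andP: (Hf_bounds (W om) (ltW M1)).
    - apply/measurable_realfun.measurable_EFinP.
      by apply: (measurableT_comp (f := @Hf R n M)); [exact: meas_Hf|exact: mW].
    - apply/measurable_realfun.measurable_EFinP.
      by apply: (measurableT_comp (f := @Hf R n (expR k0%:R))); [exact: meas_Hf|exact: mW].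
    - by move=> om _; rewrite lee_fin; apply: Hf_mono.
  have dke : fine dk <= eps.
    by apply: le_trans dk0; rewrite sub0r normrN ler_norm.
  have l : (q%:E <= EoR P (powX M X))%E by rewrite -Qq; exact: F1.
  have u : (EoR P (powX M X) <= (q + eps)%:E)%E.
    apply: le_trans (F2 M1) _; rewrite Qq EFinD leeD2l //.
    by apply: le_trans dM _; rewrite lee_fin.
  have Efin : EoR P (powX M X) \is a fin_num.
    by rewrite fin_numElt (lt_le_trans (ltNyr q) l) (le_lt_trans u (ltry _)).
  split => //.
  move: l u; rewrite -(fineK Efin) !lee_fin => l u.
  by rewrite ler0_norm ?subr_le0 // opprB lerBlDl.
rewrite Qq; apply: cvg_EFin.
  by apply: filterS (Hkey 1 ltr01) => M [].
apply/cvgrPdist_le => eps eps0.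
by apply: filterS (Hkey eps eps0) => M [].
Unshelve. all: end_near.
Qed.

End Main.

Unset Implicit Arguments.

Theorem proposition4 (R : realType) (d : measure_display) (Omega : measurableType d)
    (P : probability Omega R) (n : nat) (X : 'I_n -> Omega -> R) :
  (0 < n)%N ->
  (forall e, measurable_fun setT (X e)) ->
  (forall e om, 0 <= X e om) ->
  mutually_independent P X ->
  no_point_masses P X ->
  EoR P (powX M X) @[M --> +oo%R] --> PbM P X.
Proof.
move=> n0 mX X0 _ npm.
exact: (@main_cvg R d Omega P n X n0 mX X0 npm).
Qed.
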